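(* Let $S$ be an expanding automaton semigroup and $H$ a subgroup of $S$ (a subsemigroup of $S$ which is a group, possibly with identity different from any identity of $S$). Then there is a self-similar group $G$ such that $H$ is isomorphic to a subgroup of $G$.
   Context: An expanding automaton is a quadruple $(Q,\Sigma,t,o)$ with $Q$ a finite set of states, $\Sigma$ a finite alphabet, $t:Q\times\Sigma\to Q$ and $o:Q\times\Sigma\to\Sigma^+$. Each state $q$ induces $q:\Sigma^*\to\Sigma^*$ by $q(\emptyset)=\emptyset$, $q(\sigma w)=o(q,\sigma)\,q'(w)$ with $q'=t(q,\sigma)$; an expanding automaton semigroup is the semigroup of maps generated under composition by the states. A self-similar group is the group generated by the states of an invertible synchronous automaton (output in $\Sigma$, $o(q,\cdot)$ a permutation of $\Sigma$ for each $q$) with possibly infinitely many states. *)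

(* Defs.v *)
From mathcomp Require Import all_boot all_fingroup.
Set Implicit Arguments. Unset Strict Implicit. Unset Printing Implicit Defensive.

Definition expanding_output (Q Sigma : Type) (o : Q -> Sigma -> seq Sigma) : Prop :=
  forall q s, o q s <> [::].

Fixpoint exp_act (Q Sigma : Type) (t : Q -> Sigma -> Q) (o : Q -> Sigma -> seq Sigma)
    (q : Q) (w : seq Sigma) {struct w} : seq Sigma :=
  match w with
  | [::] => [::]
  | s :: w' => o q s ++ exp_act t o (t q s) w'
  end.

Definition comp_states (Q Sigma : Type) (t : Q -> Sigma -> Q) (o : Q -> Sigma -> seq Sigma)
    (qs : seq Q) : seq Sigma -> seq Sigma :=
  foldr (fun q g => exp_act t o q \o g) id qs.

Definition exp_semigroup (Q Sigma : Type) (t : Q -> Sigma -> Q) (o : Q -> Sigma -> seq Sigma)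
    (f : seq Sigma -> seq Sigma) : Prop :=
  exists qs : seq Q, qs <> [::] /\ f = comp_states t o qs.

(* H is a subgroup of the semigroup S: a subsemigroup which is a group
   (identity e of H arbitrary, not necessarily an identity of S). *)
Definition subgroup_of (T : Type) (S H : T -> Prop) (mul : T -> T -> T) : Prop :=
  (forall h, H h -> S h) /\
  (forall h1 h2, H h1 -> H h2 -> H (mul h1 h2)) /\
  exists e, H e /\
    (forall h, H h -> mul e h = h /\ mul h e = h) /\
    (forall h, H h -> exists h', H h' /\ mul h h' = e /\ mul h' h = e).

(* invertible synchronous automaton, states of an arbitrary (possibly infinite) type *)
Fixpoint ss_act (P : Type) (A : finType) (t : P -> A -> P) (o : P -> {perm A})
    (q : P) (w : seq A) {struct w} : seq A :=
  match w with
  | [::] => [::]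
  | s :: w' => o q s :: ss_act t o (t q s) w'
  end.

Fixpoint ss_inv (P : Type) (A : finType) (t : P -> A -> P) (o : P -> {perm A})
    (q : P) (w : seq A) {struct w} : seq A :=
  match w with
  | [::] => [::]
  | s :: w' => let u := ((o q)^-1)%g s in u :: ss_inv t o (t q u) w'
  end.

Definition ss_group (P : Type) (A : finType) (t : P -> A -> P) (o : P -> {perm A})
    (g : seq A -> seq A) : Prop :=
  exists l : seq (P * bool),
    g = foldr (fun qb h => (if qb.2 then ss_act t o qb.1 else ss_inv t o qb.1) \o h) id l.

(* Main.v *)
Require Import Defs.
From mathcomp Require Import all_boot all_fingroup.
From Stdlib Require Import FunctionalExtensionality.
Set Implicit Arguments. Unset Strict Implicit. Unset Printing Implicit Defensive.

Definition MN (T : Type) (f : seq T -> seq T) : Prop :=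
  f [::] = [::] /\ forall u v, exists r, f (u ++ v) = f u ++ r /\ size v <= size r.

Lemma exp_act_cat (Q S : Type) (t : Q -> S -> Q) o q u v :
  exp_act t o q (u ++ v) = exp_act t o q u ++ exp_act t o (foldl t q u) v.
Proof. by elim: u q => [|s u IH] q //=; rewrite IH catA. Qed.

Lemma exp_act_size (Q S : Type) (t : Q -> S -> Q) o (ho : expanding_output o) q w :
  size w <= size (exp_act t o q w).
Proof.
elim: w q => [|s w IH] q //=; rewrite size_cat.
have := ho q s; case: (o q s) => [//|x l] _ /=.
by rewrite addSn ltnS (leq_trans (IH (t q s))) // leq_addl.
Qed.

Lemma MN_exp (Q S : Type) (t : Q -> S -> Q) o (ho : expanding_output o) q :
  MN (exp_act t o q).
Proof.
split=> // u v; exists (exp_act t o (foldl t q u) v).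
by rewrite exp_act_cat; split=> //; apply: exp_act_size.
Qed.

Lemma MN_comp (T : Type) (f g : seq T -> seq T) : MN f -> MN g -> MN (f \o g).
Proof.
move=> [f0 fM] [g0 gM]; split; first by rewrite /= g0 f0.
move=> u v; have [r1 [E1 S1]] := gM u v; have [r2 [E2 S2]] := fM (g u) r1.
by exists r2; rewrite /= E1 E2; split=> //; apply: leq_trans S2.
Qed.

Lemma MN_sg (Q S : Type) (t : Q -> S -> Q) o (ho : expanding_output o) f :
  exp_semigroup t o f -> MN f.
Proof.
move=> [qs [_ ->]]; elim: qs => [|q qs IH] /=.
  by split=> // u v; exists v.
exact: MN_comp (MN_exp t ho q) IH.
Qed.

Lemma MN_size (T : Type) (f : seq T -> seq T) w : MN f -> size w <= size (f w).
Proof. by move=> [f0 fM]; have [r [E S]] := fM [::] w; rewrite E f0. Qed.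


Record hyps (S : finType) (e h h' : seq S -> seq S) : Prop := Hyps {
  mn_e : MN e; mn_h : MN h; mn_h' : MN h';
  h_ee : forall x, e (e x) = e x;
  h_eh : forall x, e (h x) = h x; h_he : forall x, h (e x) = h x;
  h_eh' : forall x, e (h' x) = h' x; h_h'e : forall x, h' (e x) = h' x;
  h_h'h : forall x, h' (h x) = e x; h_hh' : forall x, h (h' x) = e x }.

Lemma hyps_sym (S : finType) (e h h' : seq S -> seq S) : hyps e h h' -> hyps e h' h.
Proof. by case=> *; constructor. Qed.

Definition Fixb (S : finType) (e : seq S -> seq S) w := e w == w.
Definition Sset (S : finType) (e : seq S -> seq S) u : {set S} := [set a | Fixb e (rcons u a)].
Definition bij (S : finType) (A B : {set S}) a := nth a (enum (~: B)) (index a (enum (~: A))).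
Definition lt (S : finType) (h : seq S -> seq S) u a := last a (h (rcons u a)).

Lemma fix_prefix (S : finType) (e : seq S -> seq S) u v :
  MN e -> Fixb e (u ++ v) -> Fixb e u.
Proof.
move=> [e0 eM] /eqP Fx; have [r [E Sr]] := eM u v.
have Su := @MN_size _ _ u (conj e0 eM).
have Hs : size (e u) = size u.
  have := congr1 size Fx; rewrite E !size_cat => Hsz.
  apply/eqP; rewrite eqn_leq Su andbT.
  by rewrite -(leq_add2r (size r)) Hsz leq_add2l.
apply/eqP; have := congr1 (take (size u)) Fx.
by rewrite E take_size_cat // take_size_cat.
Qed.


Lemma h_fix (S : finType) (e h h' : seq S -> seq S) x : hyps e h h' -> Fixb e (h x).
Proof. by move=> H; rewrite /Fixb (h_eh H). Qed.

Lemma h_size (S : finType) (e h h' : seq S -> seq S) x :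
  hyps e h h' -> Fixb e x -> size (h x) = size x.
Proof.
move=> H /eqP Fx; apply/eqP; rewrite eqn_leq MN_size ?andbT; last exact: mn_h H.
have := @MN_size _ h' (h x) (mn_h' H); by rewrite (h_h'h H) Fx.
Qed.

Lemma h_rcons (S : finType) (e h h' : seq S -> seq S) u a :
  hyps e h h' -> Fixb e (rcons u a) -> h (rcons u a) = rcons (h u) (lt h u a).
Proof.
move=> H F; have Fu : Fixb e u by apply: (fix_prefix (v := [:: a])) (mn_e H) _; rewrite cats1.
have [_ hM] := mn_h H; have [r [E Sr]] := hM u [:: a].
have := h_size H F; rewrite -cats1 E size_cat (h_size H Fu) size_cat => /eqP.
rewrite eqn_add2l; case: r E Sr => [|c [|d r]] // E _ _.
by rewrite /lt -[rcons u a]cats1 E cats1 last_rcons.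
Qed.

Lemma h_inj_fix (S : finType) (e h h' : seq S -> seq S) x y :
  hyps e h h' -> Fixb e x -> Fixb e y -> h x = h y -> x = y.
Proof.
move=> H /eqP Fx /eqP Fy E; have := congr1 h' E; by rewrite !(h_h'h H) Fx Fy.
Qed.

Lemma card_S_le (S : finType) (e h h' : seq S -> seq S) u :
  hyps e h h' -> Fixb e u -> #|Sset e u| <= #|Sset e (h u)|.
Proof.
move=> H Fu; rewrite -(@card_in_imset _ _ (lt h u)).
  apply: subset_leq_card; apply/subsetP => b /imsetP [a]; rewrite !inE => Fa ->.
  by rewrite -(h_rcons H) // (h_fix _ H).
move=> a b; rewrite !inE => Fa Fb E.
have := h_inj_fix H Fa Fb; rewrite !(h_rcons H) // E => /(_ erefl).
exact: rcons_injr.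
Qed.

Lemma card_S (S : finType) (e h h' : seq S -> seq S) u :
  hyps e h h' -> Fixb e u -> #|Sset e u| = #|Sset e (h u)|.
Proof.
move=> H Fu; apply/eqP; rewrite eqn_leq (card_S_le H Fu) /=.
have := card_S_le (hyps_sym H) (h_fix u H); rewrite (h_h'h H).
by move/eqP: Fu => ->.
Qed.

Lemma idx_lt (S : finType) (A B : {set S}) a :
  #|A| = #|B| -> a \notin A -> index a (enum (~: A)) < size (enum (~: B)).
Proof.
move=> C Na; rewrite -cardE -(ltn_add2l #|B|) cardsC -C -(cardsC A).
by rewrite ltn_add2l cardE index_mem mem_enum inE.
Qed.

Lemma bij_notin (S : finType) (A B : {set S}) a :
  #|A| = #|B| -> a \notin A -> bij A B a \notin B.
Proof.
move=> C Na; rewrite /bij.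
have : nth a (enum (~: B)) (index a (enum (~: A))) \in enum (~: B).
  by apply: mem_nth; apply: idx_lt.
by rewrite mem_enum inE.
Qed.

Lemma bij_comp (S : finType) (A B D : {set S}) a :
  #|A| = #|B| -> #|A| = #|D| -> a \notin A -> bij B D (bij A B a) = bij A D a.
Proof.
move=> C1 C2 Na; rewrite /bij index_uniq ?enum_uniq ?idx_lt //.
by apply: set_nth_default; apply: idx_lt.
Qed.

Lemma bij_inj (S : finType) (A B : {set S}) a b :
  #|A| = #|B| -> a \notin A -> b \notin A -> bij A B a = bij A B b -> a = b.
Proof.
move=> C Na Nb; rewrite /bij (set_nth_default a b) ?idx_lt // => E.
have := congr1 (fun x => index x (enum (~: B))) E.
rewrite !index_uniq ?enum_uniq ?idx_lt // => E2.
have := congr1 (nth a (enum (~: A))) E2.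
by rewrite !nth_index ?mem_enum ?inE.
Qed.

Definition letf (S : finType) (e h : seq S -> seq S) u a :=
  if Fixb e (rcons u a) then lt h u a else bij (Sset e u) (Sset e (h u)) a.

Definition gfun (S : finType) (f : S -> S) x := if injectiveb f then f x else x.
Lemma gfun_inj (S : finType) (f : S -> S) : injective (gfun f).
Proof. by move=> x y; rewrite /gfun; case: ifP => [/injectiveP Hf|_] //; apply: Hf. Qed.
Definition mkperm (S : finType) (f : S -> S) : {perm S} := perm (@gfun_inj S f).

Lemma mkpermE (S : finType) (f : S -> S) : injective f -> mkperm f =1 f.
Proof. by move=> Hf x; rewrite permE /gfun; case: ifP => // /injectiveP. Qed.

Definition stT (S : finType) := option ((seq S -> seq S) * seq S).

Definition tt (S : finType) (e : seq S -> seq S) (s : stT S) (a : S) : stT S :=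
  match s with
  | Some (h, u) => if Fixb e (rcons u a) then Some (h, rcons u a) else None
  | None => None end.

Definition oo (S : finType) (e : seq S -> seq S) (s : stT S) : {perm S} :=
  match s with Some (h, u) => mkperm (letf e h u) | None => 1%g end.

Lemma letf_inj (S : finType) (e h h' : seq S -> seq S) u :
  hyps e h h' -> Fixb e u -> injective (letf e h u).
Proof.
move=> H Fu; have C := card_S H Fu.
have Hin : forall a, Fixb e (rcons u a) -> Fixb e (rcons (h u) (lt h u a)).
  by move=> a Fa; rewrite -(h_rcons H) // (h_fix _ H).
have Hout : forall a, ~~ Fixb e (rcons u a) ->
    ~~ Fixb e (rcons (h u) (bij (Sset e u) (Sset e (h u)) a)).
  move=> a Na; have := bij_notin C (a := a); rewrite !inE; exact.
move=> a b; rewrite /letf.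
case Fa: (Fixb e (rcons u a)); case Fb: (Fixb e (rcons u b)).
- move=> E; have := h_inj_fix H Fa Fb; rewrite !(h_rcons H) // E => /(_ erefl).
  exact: rcons_injr.
- move=> E; have := Hout b; rewrite Fb -E Hin //; by move=> /(_ isT).
- move=> E; have := Hout a; rewrite Fa E Hin //; by move=> /(_ isT).
- by apply: bij_inj; rewrite // inE ?Fa ?Fb.
Qed.

Lemma act_None (S : finType) (e : seq S -> seq S) w : ss_act (tt e) (oo e) None w = w.
Proof. by elim: w => [|a w IH] //=; rewrite perm1 IH. Qed.

Lemma act_step (S : finType) (e h h' : seq S -> seq S) u a w :
  hyps e h h' -> Fixb e u ->
  ss_act (tt e) (oo e) (Some (h, u)) (a :: w) =
  letf e h u a :: ss_act (tt e) (oo e) (tt e (Some (h, u)) a) w.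
Proof. by move=> H Fu /=; rewrite mkpermE //; apply: letf_inj H Fu. Qed.

Lemma act_fix (S : finType) (e h h' : seq S -> seq S) u x :
  hyps e h h' -> Fixb e (u ++ x) -> h u ++ ss_act (tt e) (oo e) (Some (h, u)) x = h (u ++ x).
Proof.
move=> H; elim: x u => [|a x IH] u Fx; first by rewrite !cats0.
have Fa : Fixb e (rcons u a) by apply: (fix_prefix (v := x)) (mn_e H) _; rewrite cat_rcons.
have Fx' : Fixb e (rcons u a ++ x) by rewrite cat_rcons.
rewrite (act_step _ _ H) ?(fix_prefix (mn_e H) Fx) //= /letf Fa /=.
by rewrite -[u ++ a :: x]cat_rcons -(IH _ Fx') (h_rcons H) // cat_rcons.
Qed.

Lemma act_hom (S : finType) (e h1 h1' h2 h2' k : seq S -> seq S) u w :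
  hyps e h1 h1' -> hyps e h2 h2' -> hyps e (h1 \o h2) k -> Fixb e u ->
  ss_act (tt e) (oo e) (Some (h1 \o h2, u)) w =
  ss_act (tt e) (oo e) (Some (h1, h2 u)) (ss_act (tt e) (oo e) (Some (h2, u)) w).
Proof.
move=> H1 H2 H12; elim: w u => [|a w IH] u Fu //.
have Fhu : Fixb e (h2 u) by apply: h_fix H2.
rewrite (act_step _ _ H12) // (act_step _ _ H2) // (act_step _ _ H1) //= /letf.
case Fa: (Fixb e (rcons u a)).
- have E2 := h_rcons H2 Fa; rewrite -E2 (h_fix _ H2) /=.
  have E12 := h_rcons H12 Fa; rewrite /= in E12.
  congr (_ :: _).
    have Fb : Fixb e (rcons (h2 u) (lt h2 u a)) by rewrite -E2 (h_fix _ H2).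
    by rewrite {1}/lt /= E2 (h_rcons H1) // last_rcons.
  exact: IH.
- have C2 := card_S H2 Fu; have C12 := card_S H12 Fu; rewrite /= in C12.
  have Nb := bij_notin C2 (a := a); rewrite inE Fa in Nb.
  have := Nb isT; rewrite inE => /negbTE ->.
  by rewrite bij_comp ?inE ?Fa // !act_None.
Qed.

Lemma mk_hyps (Q Sigma : finType) (t : Q -> Sigma -> Q)
    (o : Q -> Sigma -> seq Sigma) (ho : expanding_output o)
    (H : (seq Sigma -> seq Sigma) -> Prop) e
    (HS : forall h, H h -> exp_semigroup t o h)
    (He : H e)
    (Hid : forall h, H h -> e \o h = h /\ h \o e = h)
    (Hinv : forall h, H h -> exists h', H h' /\ h \o h' = e /\ h' \o h = e) h :
  H h -> exists h', hyps e h h'.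
Proof.
move=> Hh; have [h' [Hh' [E1 E2]]] := Hinv h Hh; exists h'.
have [A1 A2] := Hid h Hh; have [B1 B2] := Hid h' Hh'; have [C1 _] := Hid e He.
constructor; try exact: (MN_sg ho (HS _ _)).
- by move=> x; have := congr1 (fun f => f x) C1.
- by move=> x; have := congr1 (fun f => f x) A1.
- by move=> x; have := congr1 (fun f => f x) A2.
- by move=> x; have := congr1 (fun f => f x) B1.
- by move=> x; have := congr1 (fun f => f x) B2.
- by move=> x; have := congr1 (fun f => f x) E2.
- by move=> x; have := congr1 (fun f => f x) E1.
Qed.

Theorem mainTheorem11 (Q Sigma : finType) (t : Q -> Sigma -> Q)
    (o : Q -> Sigma -> seq Sigma) (ho : expanding_output o)
    (H : (seq Sigma -> seq Sigma) -> Prop)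
    (hH : subgroup_of (exp_semigroup t o) H (fun f g => f \o g)) :
  exists (A : finType) (P : Type) (t' : P -> A -> P) (o' : P -> {perm A})
         (phi : (seq Sigma -> seq Sigma) -> (seq A -> seq A)),
    (forall h, H h -> ss_group t' o' (phi h)) /\
    (forall h1 h2, H h1 -> H h2 -> phi (h1 \o h2) = phi h1 \o phi h2) /\
    (forall h1 h2, H h1 -> H h2 -> phi h1 = phi h2 -> h1 = h2).
Proof.
case: hH => [HS [Hmul [e [He [Hid Hinv]]]]].
have MK := mk_hyps ho HS He Hid Hinv.
exists Sigma, (stT Sigma), (tt e), (oo e), (fun h => ss_act (tt e) (oo e) (Some (h, [::]))).
have F0 : Fixb e [::] by rewrite /Fixb; have [-> _] := MN_sg ho (HS _ He).
split; [|split].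
- by move=> h _; exists [:: (Some (h, [::]), true)].
- move=> h1 h2 H1 H2; apply: functional_extensionality => w /=.
  have [k1 K1] := MK _ H1; have [k2 K2] := MK _ H2; have [k12 K12] := MK _ (Hmul _ _ H1 H2).
  rewrite (act_hom w K1 K2 K12 F0); have [-> _] := mn_h K2; done.
- move=> h1 h2 H1 H2 E; apply: functional_extensionality => x.
  have [k1 K1] := MK _ H1; have [k2 K2] := MK _ H2.
  have Fx : Fixb e ([::] ++ e x) by rewrite /Fixb /= (h_ee K1).
  rewrite -(h_he K1) -(h_he K2) -(act_fix K1 Fx) -(act_fix K2 Fx) /= E.
  by have [-> _] := mn_h K1; have [-> _] := mn_h K2.
Qed.
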